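(* For every state $n\in\mathbb{N}$ of the transducer $\mathcal{D}_{p/q}$ and every letter $b\in A_q$, there exist a unique state $m\in\mathbb{N}$ and a unique letter $c\in A_q$ such that $n\xrightarrow{b|c} m$ is a transition of $\mathcal{D}_{p/q}$.
   Context: Let $p>q>1$ be coprime integers, $A_q=\{0,1,\dots,q-1\}$ and $B=\{p-(2q-1),\dots,p-1\}$ (a set of integers, possibly containing negative ones). For $n\in\mathbb{N}$ and $a\in\mathbb{Z}$, let $\tau(n,a)=\frac{np+a}{q}$, defined only when $q$ divides $np+a$. For $a\in B$ let $\omega(a)=\{(b,c)\in A_q\times A_q : c-b=a-(p-q)\}$. The transducer $\mathcal{D}_{p/q}$ has state set $\mathbb{N}$, input and output alphabet $A_q$, initial state $0$, all states final, and has a transition $n\xrightarrow{b|c}\tau(n,a)$ (input $b$, output $c$) for every $n\in\mathbb{N}$, every $a\in B$ such that $\tau(n,a)$ is defined, and every $(b,c)\in\omega(a)$; it has no other transitions. *)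

(* Defs.v *)
From Stdlib Require Import ZArith Znumtheory.
Open Scope Z_scope.

Definition inA (q x : Z) : Prop := 0 <= x < q.

Definition inB (p q a : Z) : Prop := p - (2 * q - 1) <= a <= p - 1.

(* tau(n,a) = (n p + a)/q, defined only when q | n p + a;
   tau_is p q n a m  <->  tau(n,a) is defined and equals m. *)
Definition tau_is (p q n a m : Z) : Prop :=
  (q | n * p + a) /\ m * q = n * p + a.

Definition in_omega (p q a b c : Z) : Prop :=
  inA q b /\ inA q c /\ c - b = a - (p - q).

Definition transition (p q : Z) (n : nat) (b c : Z) (m : nat) : Prop :=
  exists a : Z, inB p q a /\ tau_is p q (Z.of_nat n) a (Z.of_nat m)
                /\ in_omega p q a b c.

(* Main.v *)
Require Import Defs.
From Stdlib Require Import ZArith Znumtheory Lia.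
Open Scope Z_scope.

Theorem mainTheorem1 (p q : Z) (hq : 1 < q) (hpq : q < p) (hcop : Z.gcd p q = 1)
  (n : nat) (b : Z) (hb : inA q b) :
  exists m : nat, exists c : Z,
    transition p q n b c m /\
    (forall (m' : nat) (c' : Z), transition p q n b c' m' -> m' = m /\ c' = c).
Proof.
  unfold inA in hb.
  set (NN := Z.of_nat n).
  assert (HN : 0 <= NN) by (unfold NN; lia).
  set (xx := b - (NN + 1) * p).
  set (kk := xx / q).
  set (c := xx mod q).
  assert (Hx : xx = q * kk + c) by (apply Z.div_mod; lia).
  assert (Hc : 0 <= c < q) by (apply Z.mod_pos_bound; lia).
  assert (Hk : 0 <= - kk - 1).
  { assert (q * (-kk-1) = NN * p + (c - b + p - q)) by (unfold xx in Hx; lia).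
    assert (NN * p >= 0) by nia.
    assert (q * (-kk-1) > -q) by lia.
    nia. }
  exists (Z.to_nat (-kk-1)), c.
  split.
  - exists (c - b + p - q).
    unfold inB, tau_is, in_omega, inA.
    rewrite Z2Nat.id by lia.
    split; [lia|]. split; [split|].
    + exists (-kk-1). unfold xx in Hx; lia.
    + unfold xx in Hx; lia.
    + lia.
  - intros m' c' [a [HB [[_ Ht] [Hb' [Hc' Ho]]]]].
    fold NN in Ht. unfold inA in Hc', Hb'.
    assert (Hd : (c' - c) = q * (Z.of_nat m' - (-kk-1))) by (unfold xx in Hx; lia).
    assert (c' = c).
    { set (d := Z.of_nat m' - (-kk-1)) in *.
      assert (d < 1) by (apply (Z.mul_lt_mono_pos_l q); lia).
      assert (-1 < d) by (apply (Z.mul_lt_mono_pos_l q); lia).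
      assert (Hd0 : d = 0) by lia. rewrite Hd0 in Hd. lia. }
    subst c'.
    assert (Z.of_nat m' = -kk-1) by (assert (q * (Z.of_nat m' - (-kk-1)) = 0) by lia; apply Z.mul_eq_0 in H; lia).
    split; [lia|reflexivity].
Qed.
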